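(* The semigroup $\mathbb NA$ is scored if and only if $\mathbb C[S_1]$ is a simple $\mathbb Z^d$-graded $D(R_A)$-module (it has no nonzero proper $\mathbb Z^d$-graded $D(R_A)$-submodules).
   Context: $A\subset\mathbb Z^d$ is a finite set generating the group $\mathbb Z^d$; $R_A=\mathbb C[\mathbb NA]\subseteq\mathbb C[t_1^{\pm1},\dots,t_d^{\pm1}]$; $D(R_A)=\{P\in\mathbb C[t^{\pm1}]\langle\partial_1,\dots,\partial_d\rangle:P(R_A)\subseteq R_A\}$, which acts on Laurent polynomials. For a facet $\sigma$ of $\mathbb R_{\ge0}A$, $F_\sigma$ is the unique linear form with $F_\sigma(\mathbb R_{\ge0}A)\ge0$, $F_\sigma(\sigma)=0$, $F_\sigma(\mathbb Z^d)=\mathbb Z$. $S_1=\bigcap_{\sigma\text{ facet}}\{\mathbf a\in\mathbb Z^d:F_\sigma(\mathbf a)\in F_\sigma(\mathbb NA)\}$ (equivalently the set of $\mathbf a$ with $E_\sigma(\mathbf a)\neq\emptyset$ for all facets, where $E_\sigma(\mathbf a)=\{\boldsymbol\lambda\in\mathbb C(A\cap\sigma)/\mathbb Z(A\cap\sigma):\mathbf a-\boldsymbol\lambda\in\mathbb NA+\mathbb Z(A\cap\sigma)\}$), and $\mathbb C[S_1]=\bigoplus_{\mathbf a\in S_1}\mathbb Ct^{\mathbf a}$, a $\mathbb Z^d$-graded $D(R_A)$-submodule of $\mathbb C[t^{\pm1}]$. $\mathbb NA$ is scored if $\mathbb NA=S_1$. *)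

(* Defs.v *)
From HB Require Import structures.
From mathcomp Require Import all_boot all_order all_algebra.
From mathcomp Require Import reals complex.

Set Implicit Arguments.
Unset Strict Implicit.
Unset Printing Implicit Defensive.

Import Order.TTheory GRing.Theory Num.Theory.
Local Open Scope ring_scope.

Section AffineSemigroup.
Variables (R : realType) (d : nat).

Notation zvec := 'rV[int]_d.

Definition zlin (F v : zvec) : int := \sum_(i < d) F 0 i * v 0 i.

Definition rlin (l x : 'rV[R]_d) : R := \sum_(i < d) l 0 i * x 0 i.

Definition toR (v : zvec) : 'rV[R]_d := map_mx (fun z : int => z%:~R) v.

Definition inNA (A : seq zvec) (v : zvec) : Prop :=
  exists c : zvec -> nat, v = \sum_(a <- A) (c a)%:Z *: a.

Definition generates_Zd (A : seq zvec) : Prop :=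
  forall v : zvec, exists c : zvec -> int, v = \sum_(a <- A) c a *: a.

Definition cone (A : seq zvec) (x : 'rV[R]_d) : Prop :=
  exists l : zvec -> R, (forall a, 0 <= l a) /\ x = \sum_(a <- A) l a *: toR a.

Definition dim_ge (S : 'rV[R]_d -> Prop) (k : nat) : Prop :=
  exists M : 'M[R]_(k, d), row_free M /\ forall i, S (row i M).

Definition is_face (A : seq zvec) (s : 'rV[R]_d -> Prop) : Prop :=
  exists l : 'rV[R]_d, (forall x, cone A x -> 0 <= rlin l x) /\
    forall x, s x <-> (cone A x /\ rlin l x = 0).

Definition is_facet (A : seq zvec) (s : 'rV[R]_d -> Prop) : Prop :=
  is_face A s /\ exists k, k.+1 = d /\ dim_ge s k /\ ~ dim_ge s k.+1.

(* F is the (unique) primitive integral support form F_s of the facet s *)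
Definition is_facet_form (A : seq zvec) (s : 'rV[R]_d -> Prop) (F : zvec) : Prop :=
  (forall x, cone A x -> 0 <= rlin (toR F) x) /\
  (forall x, s x -> rlin (toR F) x = 0) /\
  (exists v, zlin F v = 1).

Definition inS1 (A : seq zvec) (a : zvec) : Prop :=
  forall s, is_facet A s -> forall F, is_facet_form A s F ->
    exists b, inNA A b /\ zlin F a = zlin F b.

Definition scored (A : seq zvec) : Prop := forall v, inNA A v <-> inS1 A v.

(* Laurent polynomials in C[t^{+-1}]: finitely supported coefficient maps *)
Definition laurent (f : zvec -> R[i]) : Prop :=
  exists s : seq zvec, forall a, a \notin s -> f a = 0.

Definition supported_in (S : zvec -> Prop) (f : zvec -> R[i]) : Prop :=
  forall a, f a != 0 -> S a.

(* differential operators in C[t^{+-1}]<d_1..d_d>, written as finite sums of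
   terms  c * t^b * d^alpha  *)
Definition dop := seq (R[i] * zvec * {ffun 'I_d -> nat}).

Definition alvec (al : {ffun 'I_d -> nat}) : zvec := \row_i (al i)%:Z.

(* d^alpha t^a = ffact a alpha * t^(a - alpha) *)
Definition ffact (a : zvec) (al : {ffun 'I_d -> nat}) : R[i] :=
  \prod_(i < d) \prod_(j < al i) ((a 0 i)%:~R - j%:R).

Definition dact (P : dop) (f : zvec -> R[i]) : zvec -> R[i] :=
  fun c => \sum_(t <- P)
    t.1.1 * ffact (c - t.1.2 + alvec t.2) t.2 * f (c - t.1.2 + alvec t.2).

Definition inDRA (A : seq zvec) (P : dop) : Prop :=
  forall f, laurent f -> supported_in (inNA A) f ->
    laurent (dact P f) /\ supported_in (inNA A) (dact P f).

Definition graded_submodule (A : seq zvec) (S : zvec -> Prop)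
    (N : (zvec -> R[i]) -> Prop) : Prop :=
  (forall f, N f -> laurent f /\ supported_in S f) /\
  [/\ N (fun _ => 0),
      forall f g, N f -> N g -> N (fun c => f c + g c),
      forall (k : R[i]) f, N f -> N (fun c => k * f c),
      forall P, inDRA A P -> forall f, N f -> N (dact P f)
    & forall f, N f -> forall a, N (fun c => if c == a then f a else 0)].

Definition C_S1_graded_simple (A : seq zvec) : Prop :=
  forall N, graded_submodule A (inS1 A) N ->
    (forall f, N f -> f = (fun _ => 0)) \/
    (forall f, laurent f -> supported_in (inS1 A) f -> N f).

End AffineSemigroup.

(* Main.v *)
Require Import Defs.
From HB Require Import structures.
From mathcomp Require Import all_boot all_order all_algebra.
From mathcomp Require Import reals complex.
From mathcomp Require Import zify ring.
From Stdlib Require Import Classical FunctionalExtensionality.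

Set Implicit Arguments. Unset Strict Implicit. Unset Printing Implicit Defensive.
Import Order.TTheory GRing.Theory Num.Theory.
Local Open Scope ring_scope.

Section Helpers.
Variables (R : realType) (d : nat).
Local Notation zvec := 'rV[int]_d.
Implicit Types (A : seq zvec) (a b c u v F : zvec).

Lemma zlinD F u v : zlin F (u + v) = zlin F u + zlin F v.
Proof. by rewrite /zlin -big_split; apply: eq_bigr => i _; rewrite mxE mulrDr. Qed.
Lemma zlin0 F : zlin F 0 = 0.
Proof. by rewrite /zlin big1 // => i _; rewrite mxE mulr0. Qed.
Lemma zlinN F u : zlin F (- u) = - zlin F u.
Proof. by rewrite /zlin -sumrN; apply: eq_bigr => i _; rewrite mxE mulrN. Qed.
Lemma zlinB F u v : zlin F (u - v) = zlin F u - zlin F v.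
Proof. by rewrite zlinD zlinN. Qed.
Lemma zlinZ F k u : zlin F (k *: u) = k * zlin F u.
Proof. by rewrite /zlin mulr_sumr; apply: eq_bigr => i _; rewrite mxE mulrCA. Qed.
Lemma zlinMn F u n : zlin F (u *+ n) = zlin F u *+ n.
Proof. elim: n => [|n IH]; first by rewrite !mulr0n zlin0.
by rewrite !mulrS zlinD IH. Qed.
Lemma zlin_sum F (s : seq zvec) (g : zvec -> int) :
  zlin F (\sum_(a <- s) g a *: a) = \sum_(a <- s) g a * zlin F a.
Proof. elim: s => [|x s IH]; first by rewrite !big_nil zlin0.
by rewrite !big_cons zlinD zlinZ IH. Qed.

Lemma rlinD (l x y : 'rV[R]_d) : rlin l (x + y) = rlin l x + rlin l y.
Proof. by rewrite /rlin -big_split; apply: eq_bigr => i _; rewrite mxE mulrDr. Qed.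
Lemma rlin0 (l : 'rV[R]_d) : rlin l 0 = 0.
Proof. by rewrite /rlin big1 // => i _; rewrite mxE mulr0. Qed.
Lemma rlinZ (l x : 'rV[R]_d) k : rlin l (k *: x) = k * rlin l x.
Proof. by rewrite /rlin mulr_sumr; apply: eq_bigr => i _; rewrite mxE mulrCA. Qed.
Lemma rlinMn (l x : 'rV[R]_d) n : rlin l (x *+ n) = rlin l x *+ n.
Proof. elim: n => [|n IH]; first by rewrite !mulr0n rlin0.
by rewrite !mulrS rlinD IH. Qed.
Lemma rlin_sum (l : 'rV[R]_d) (s : seq zvec) (g : zvec -> R) :
  rlin l (\sum_(a <- s) g a *: toR R a) = \sum_(a <- s) g a * rlin l (toR R a).
Proof. elim: s => [|x s IH]; first by rewrite !big_nil rlin0.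
by rewrite !big_cons rlinD rlinZ IH. Qed.
Lemma rlin_toR F v : rlin (toR R F) (toR R v) = (zlin F v)%:~R.
Proof. rewrite /rlin /zlin rmorph_sum; apply: eq_bigr => i _.
by rewrite !mxE rmorphM. Qed.

Lemma inNA0 A : inNA A 0.
Proof. by exists (fun _ => 0%N); rewrite big1 // => a _; rewrite scale0r. Qed.
Lemma inNAD A u v : inNA A u -> inNA A v -> inNA A (u + v).
Proof. move=> [c ->] [c' ->]; exists (fun a => (c a + c' a)%N).
by rewrite -big_split; apply: eq_bigr => a _; rewrite PoszD scalerDl. Qed.
Lemma inNAMn A n u : inNA A u -> inNA A (u *+ n).
Proof. move=> Hu; elim: n => [|n IH]; first by rewrite mulr0n; exact: inNA0.
by rewrite mulrS; apply: inNAD. Qed.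
Lemma inNA_ge0 A F b : (forall a, a \in A -> 0 <= zlin F a) -> inNA A b -> 0 <= zlin F b.
Proof. move=> H [c ->]; rewrite zlin_sum big_seq; apply: sumr_ge0 => a Ha.
by apply: mulr_ge0 => //; apply: H. Qed.

Lemma count_sum (V : nmodType) A a (g : zvec -> V) :
  \sum_(b <- A) (if b == a then g b else 0) = g a *+ count_mem a A.
Proof. elim: A => [|x s IH]; first by rewrite big_nil.
rewrite big_cons IH /=; case: eqP => [->|_]; last by rewrite add0r.
by rewrite mulrS. Qed.

Lemma form_ge0 A s F : is_facet_form (R:=R) A s F -> forall a, a \in A -> 0 <= zlin F a.
Proof. move=> [H _] a Ha.
have : 0 <= rlin (toR R F) (\sum_(b <- A) (b == a)%:R *: toR R b).
  by apply: H; exists (fun b => (b == a)%:R); split => // b; rewrite ler0n.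
rewrite rlin_sum.
have -> : \sum_(b <- A) (b == a)%:R * rlin (toR R F) (toR R b) =
          \sum_(b <- A) (if b == a then rlin (toR R F) (toR R b) else 0).
  by apply: eq_bigr => b _; case: eqP; rewrite ?mul1r ?mul0r.
rewrite count_sum rlin_toR.
have Hc : (0 < count_mem a A)%N by rewrite -has_count; apply/hasP; exists a => //=.
by rewrite pmulrn_lge0 // ler0z.
Qed.

End Helpers.



Lemma nat_rep (Q n : nat) : (Q * Q <= n)%N ->
  ((n %/ Q - n %% Q) * Q + n %% Q * (Q + 1) = n)%N.
Proof.
case: (posnP Q) => [->|Qp] Hn; first by rewrite divn0 modn0; lia.
have Hd : (Q <= n %/ Q)%N by rewrite leq_divRL.
have Hm := ltn_pmod n Qp. have He := divn_eq n Q.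
move: Hd Hm He; set D := (n %/ Q)%N; set r := (n %% Q)%N => Hd Hm He.
rewrite mulnBl mulnDr muln1 addnA subnK; first by rewrite -He.
by rewrite leq_mul2r; apply/orP; right; apply: ltnW; apply: leq_trans Hm Hd.
Qed.

Section Cof.
Variables (d : nat).
Local Notation zvec := 'rV[int]_d.
Implicit Types (A : seq zvec) (a b c u v F : zvec).

Lemma cofinite A F : generates_Zd A -> (forall a, a \in A -> 0 <= zlin F a) ->
  (exists v, zlin F v = 1) ->
  exists N0 : nat, forall n : nat, (N0 <= n)%N -> exists b, inNA A b /\ zlin F b = n%:Z.
Proof.
move=> gen Fge0 [v Fv]; have [c Hc] := gen v.
pose p a := if 0 <= c a then `|c a|%N else 0%N.
pose q a := if 0 <= c a then 0%N else `|c a|%N.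
pose b1 := \sum_(a <- A) (p a)%:Z *: a.
pose b2 := \sum_(a <- A) (q a)%:Z *: a.
have NA1 : inNA A b1 by exists p.
have NA2 : inNA A b2 by exists q.
have Hv : v = b1 - b2.
  rewrite Hc /b1 /b2 -sumrB; apply: eq_bigr => a _; rewrite -scalerBl; congr (_ *: _).
  rewrite /p /q; case: ifP => H; rewrite ?subr0 ?sub0r.
    by rewrite gez0_abs.
  by rewrite ltz0_abs ?opprK // ltNge H.
have F2 := inNA_ge0 Fge0 NA2.
set Q := `|zlin F b2|%N.
have E2 : zlin F b2 = Q%:Z by rewrite gez0_abs.
have E1 : zlin F b1 = Q%:Z + 1.
  by rewrite -E2; move: Fv; rewrite Hv zlinB => <-; rewrite addrC subrK.
exists (Q * Q)%N => n Hn.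
exists (b2 *+ (n %/ Q - n %% Q) + b1 *+ (n %% Q)).
split; first by apply: inNAD; apply: inNAMn.
rewrite zlinD !zlinMn E1 E2.
move: (nat_rep Hn).
set x := (n %/ Q - n %% Q)%N; set y := (n %% Q)%N => Hr.
rewrite -Hr PoszD !PoszM PoszD.
rewrite !pmulrn !mulrzz; ring.
Qed.
End Cof.



Lemma int_eq1 (n m : int) : n * m = 1 -> n = 1 \/ n = -1.
Proof. move=> H. have : (`|n| * `|m| = 1)%N by rewrite -abszM H.
move/eqP; rewrite muln_eq1 => /andP[/eqP Hn _].
case: n Hn {H} => [k|k] /= Hk; first by left; rewrite Hk.
by right; case: Hk => ->. Qed.

Lemma psum_seq_eq0 (T : eqType) (K : numDomainType) (s : seq T) (f : T -> K) :
  (forall i, i \in s -> 0 <= f i) -> \sum_(i <- s) f i = 0 ->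
  forall i, i \in s -> f i = 0.
Proof.
elim: s => [|x s IH] //= Hge; rewrite big_cons => /eqP.
have Hx := Hge x (mem_head x s).
have Hs : 0 <= \sum_(i <- s) f i.
  by rewrite big_seq; apply: sumr_ge0 => i Hi; apply: Hge; rewrite inE Hi orbT.
rewrite paddr_eq0 // => /andP[/eqP H1 /eqP H2] i; rewrite inE => /orP[/eqP ->|Hi] //.
by apply: IH => // j Hj; apply: Hge; rewrite inE Hj orbT.
Qed.

Section Uniq.
Variables (R : realType) (d : nat).
Local Notation zvec := 'rV[int]_d.
Implicit Types (A : seq zvec) (a b c u v F : zvec).

Lemma rlin0l (x : 'rV[R]_d) : rlin 0 x = 0.
Proof. by rewrite /rlin big1 // => i _; rewrite mxE mul0r. Qed.
Lemma rlinZl (l x : 'rV[R]_d) k : rlin (k *: l) x = k * rlin l x.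
Proof. by rewrite /rlin mulr_sumr; apply: eq_bigr => i _; rewrite mxE mulrA. Qed.

Lemma zlin_delta F (j : 'I_d) : zlin F (delta_mx 0 j) = F 0 j.
Proof.
rewrite /zlin (bigD1 j) //= big1 ?addr0; first by rewrite mxE !eqxx mulr1.
by move=> i /negPf Hi; rewrite mxE eqxx /= Hi mulr0.
Qed.

Lemma gen_zero A F : generates_Zd A -> (forall a, a \in A -> zlin F a = 0) ->
  forall v, zlin F v = 0.
Proof. move=> gen H v; have [c ->] := gen v; rewrite zlin_sum big_seq big1 // => a Ha.
by rewrite H ?mulr0. Qed.

Lemma form_unique A s s' F F' : generates_Zd A -> is_facet (R:=R) A s ->
  is_facet_form (R:=R) A s F -> is_facet_form (R:=R) A s' F' ->
  (forall a, a \in A -> (zlin F a == 0) = (zlin F' a == 0)) -> F = F'.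
Proof.
move=> gen [[l [Hl Hs]] [k [Hk [[M [HM Hrows]] _]]]] HF HF' Hz.
have Fge0 := form_ge0 HF; have F'ge0 := form_ge0 HF'.
case: HF => [Fc [Fs [v Fv]]]; case: HF' => [F'c [F's [v' F'v]]].
have stepa : forall x, cone A x -> rlin (toR R F) x = 0 -> rlin (toR R F') x = 0.
  move=> x [lam [lam0 ->]]; rewrite !rlin_sum => H0.
  have := psum_seq_eq0 _ H0.
  have Hge : forall a, a \in A -> 0 <= lam a * rlin (toR R F) (toR R a).
    move=> a Ha; rewrite rlin_toR; apply: mulr_ge0 => //.
    by rewrite ler0z; apply: Fge0.
  move=> /(_ Hge) Hterm.
  rewrite big_seq big1 // => a Ha; have /eqP := Hterm a Ha.
  rewrite mulf_eq0 => /orP[/eqP ->|]; first by rewrite mul0r.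
  rewrite !rlin_toR intr_eq0 Hz // => /eqP ->; by rewrite mulr0.
set u := toR R F; set u' := toR R F'.
have Hker : (u' <= kermx M^T)%MS.
  apply/sub_kermxP/matrixP => i j; rewrite ord1 !mxE.
  have -> : \sum_j0 u' 0 j0 * M^T j0 j = rlin u' (row j M).
    by apply: eq_bigr => j0 _; rewrite !mxE.
  have [Hc Hl0] := (Hs _).1 (Hrows j).
  by apply: stepa => //; apply: Fs; apply: Hrows.
have HkerF : (u <= kermx M^T)%MS.
  apply/sub_kermxP/matrixP => i j; rewrite ord1 !mxE.
  have -> : \sum_j0 u 0 j0 * M^T j0 j = rlin u (row j M).
    by apply: eq_bigr => j0 _; rewrite !mxE.
  by apply: Fs; apply: Hrows.
have rk : \rank (kermx M^T) = 1%N.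
  by rewrite mxrank_ker mxrank_tr (eqP HM) -Hk subSnn.
have u0 : u != 0.
  apply/eqP => E; have := rlin_toR R F v; rewrite -/u E rlin0l Fv => /esym/eqP.
  by rewrite oner_eq0.
have rku : \rank u = 1%N by rewrite rank_rV u0.
have Hsup : (kermx M^T <= u)%MS.
  by have := (mxrank_leqif_sup HkerF).2; rewrite rku rk eqxx => <-.
have /sub_rVP [kap Ekap] := submx_trans Hker Hsup.
have Hw : forall w, (zlin F' w)%:~R = kap * (zlin F w)%:~R :> R.
  by move=> w; rewrite -!rlin_toR -/u -/u' Ekap rlinZl.
have Hn : forall w, zlin F' w = zlin F' v * zlin F w.
  move=> w; apply: (@intr_inj R); rewrite intrM !Hw Fv mulr1 //.
have [E1|E1] := int_eq1 (etrans (esym (Hn v')) F'v).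
  apply/rowP => j; rewrite -!zlin_delta.
  by rewrite Hn E1 mul1r.
exfalso.
have Hz0 : forall a, a \in A -> zlin F a = 0.
  move=> a Ha; apply/eqP; rewrite eq_le Fge0 // andbT.
  by have := F'ge0 a Ha; rewrite Hn E1 mulN1r oppr_ge0.
by move: Fv; rewrite (gen_zero gen Hz0).
Qed.
End Uniq.



Lemma finite_by_key (T : eqType) (K : finType) (P : T -> Prop) (key : T -> K) :
  (forall x y, P x -> P y -> key x = key y -> x = y) ->
  exists L : seq T, forall x, P x -> x \in L.
Proof.
move=> inj.
suff H : forall ks : seq K, exists L : seq T, forall x, P x -> key x \in ks -> x \in L.
  by have [L HL] := H (index_enum K); exists L => x Px; apply: HL => //; rewrite mem_index_enum.
elim=> [|k ks [L HL]]; first by exists [::].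
have [[x [Px Ex]]|No] := classic (exists x, P x /\ key x = k).
  exists (x :: L) => y Py; rewrite inE => /orP[/eqP Ey|Hy].
    have -> : y = x by apply: inj => //; rewrite Ey Ex.
    by rewrite eqxx.
  by rewrite HL ?orbT.
exists L => y Py; rewrite inE => /orP[/eqP Ey|Hy]; last exact: HL.
by exfalso; apply: No; exists y.
Qed.

Section Fin.
Variables (R : realType) (d : nat).
Local Notation zvec := 'rV[int]_d.

Lemma facet_forms_finite (A : seq zvec) : generates_Zd A ->
  exists L : seq zvec, forall s F, is_facet (R:=R) A s -> is_facet_form (R:=R) A s F -> F \in L.
Proof.
move=> gen.
pose key (F : zvec) := [ffun i : 'I_(size A) => zlin F (nth 0 A i) == 0].
have inj : forall x y, (exists s, is_facet (R:=R) A s /\ is_facet_form (R:=R) A s x) ->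
   (exists s, is_facet (R:=R) A s /\ is_facet_form (R:=R) A s y) -> key x = key y -> x = y.
  move=> x y [s [Hs Hx]] [s' [_ Hy]] Ek.
  apply: (form_unique gen Hs Hx Hy) => a Ha.
  have Hi : (index a A < size A)%N by rewrite index_mem.
  have := congr1 (fun f : {ffun 'I_(size A) -> bool} => f (Ordinal Hi)) Ek.
  by rewrite !ffunE /= nth_index.
have [L HL] := finite_by_key inj.
by exists L => s F Hs HF; apply: HL; exists s.
Qed.
End Fin.



Section Poly.
Variables (R : realType) (d : nat).
Local Notation zvec := 'rV[int]_d.
Local Notation C := R[i].
Local Notation mono := (C * {ffun 'I_d -> nat})%type.
Implicit Types (c : zvec).

Definition pfun (ls : seq mono) (c : zvec) : C :=
  \sum_(t <- ls) t.1 * ffact R c t.2.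
Definition polyfun (q : zvec -> C) := exists ls, forall c, q c = pfun ls c.

Lemma ffact0 c : ffact R c [ffun => 0%N] = 1.
Proof. by rewrite /ffact big1 // => i _; rewrite ffunE big_ord0. Qed.

Lemma polyfun_ext q q' : (forall c, q c = q' c) -> polyfun q -> polyfun q'.
Proof. by move=> E [ls H]; exists ls => c; rewrite -E. Qed.

Lemma polyfun_const k : polyfun (fun _ => k).
Proof. by exists [:: (k, [ffun => 0%N])] => c; rewrite /pfun big_cons big_nil /= ffact0 mulr1 addr0. Qed.

Lemma polyfun_add q q' : polyfun q -> polyfun q' -> polyfun (fun c => q c + q' c).
Proof. by move=> [l H] [l' H']; exists (l ++ l') => c; rewrite /pfun big_cat H H'. Qed.

Lemma polyfun_scale k q : polyfun q -> polyfun (fun c => k * q c).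
Proof. move=> [l H]; exists [seq (k * t.1, t.2) | t : mono <- l] => c.
by rewrite /pfun big_map H /pfun mulr_sumr; apply: eq_bigr => t _; rewrite mulrA. Qed.

Lemma ffactS c (al : {ffun 'I_d -> nat}) (i : 'I_d) :
  ffact R c [ffun j => (al j + (j == i))%N] = ffact R c al * ((c 0 i)%:~R - (al i)%:R).
Proof.
rewrite /ffact (bigD1 i) //= [in RHS](bigD1 i) //= ffunE eqxx addn1 big_ord_recr /=.
rewrite -!mulrA; congr (_ * _); rewrite mulrC; congr (_ * _).
apply: eq_bigr => j Hj; rewrite ffunE (negPf Hj) addn0 //.
Qed.

Lemma polyfun_mulX q (i : 'I_d) : polyfun q -> polyfun (fun c => q c * (c 0 i)%:~R).
Proof. move=> [l H].
exists ([seq (t.1, [ffun j => (t.2 j + (j == i))%N]) | t : mono <- l] ++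
        [seq (t.1 * (t.2 i)%:R, t.2) | t : mono <- l]) => c.
rewrite /pfun big_cat /= !big_map H /pfun mulr_suml -big_split; apply: eq_bigr => t _ /=.
rewrite ffactS; ring.
Qed.

Lemma polyfun_sum (I : Type) (r : seq I) (g : I -> zvec -> C) :
  (forall i, polyfun (g i)) -> polyfun (fun c => \sum_(i <- r) g i c).
Proof. move=> Hg; elim: r => [|x r IH].
  by apply: (polyfun_ext _ (polyfun_const 0)) => c; rewrite big_nil.
apply: (polyfun_ext _ (polyfun_add (Hg x) IH)) => c; by rewrite big_cons.
Qed.

Lemma polyfun_lin q (F : zvec) (k : nat) : polyfun q ->
  polyfun (fun c => q c * ((zlin F c)%:~R - k%:R)).
Proof. move=> Hq.
have H1 : polyfun (fun c => \sum_(i < d) (F 0 i)%:~R * (q c * (c 0 i)%:~R) + (- k%:R) * q c).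
  apply: polyfun_add; last exact: polyfun_scale.
  by apply: polyfun_sum => i; apply: polyfun_scale; apply: polyfun_mulX.
apply: (polyfun_ext _ H1) => c.
rewrite /zlin rmorph_sum mulrBr mulr_sumr; congr (_ + _); last by ring.
by apply: eq_bigr => i _; rewrite rmorphM; ring.
Qed.

Lemma polyfun_prod q (F : zvec) (ks : seq nat) : polyfun q ->
  polyfun (fun c => q c * \prod_(k <- ks) ((zlin F c)%:~R - k%:R)).
Proof. elim: ks q => [|k ks IH] q Hq.
  by apply: (polyfun_ext _ Hq) => c; rewrite big_nil mulr1.
apply: (polyfun_ext _ (IH _ (polyfun_lin F k Hq))) => c.
by rewrite big_cons mulrA.
Qed.

Definition mkP (ls : seq mono) (e : zvec) : dop R d :=
  [seq (t.1, alvec t.2 + e, t.2) | t <- ls].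

Lemma dact_mkP ls e f c : dact (mkP ls e) f c = pfun ls (c - e) * f (c - e).
Proof.
rewrite /dact /mkP big_map /pfun mulr_suml; apply: eq_bigr => t _ /=.
by rewrite opprD addrA addrAC subrK.
Qed.

Lemma inDRA_mkP (A : seq zvec) ls e :
  (forall c, inNA A c -> ~ inNA A (c + e) -> pfun ls c = 0) -> inDRA A (mkP ls e).
Proof.
move=> H f [s Hs] Hsupp; split.
  exists (map (fun x => x + e) s) => c Hc; rewrite dact_mkP Hs ?mulr0 //.
  apply/negP => Hin; move/negP: Hc; apply; apply/mapP; exists (c - e) => //.
  by rewrite subrK.
move=> c; rewrite dact_mkP mulf_eq0 negb_or => /andP[Hq Hf].
have := Hsupp _ Hf => HNA; apply: NNPP => Hc; move/eqP: Hq; apply.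
by apply: H => //; rewrite subrK.
Qed.

Definition ls1 : seq mono := [:: (1, [ffun => 0%N])].
Lemma pfun_ls1 c : pfun ls1 c = 1.
Proof. by rewrite /pfun big_cons big_nil /= ffact0 mulr1 addr0. Qed.

End Poly.



Section Q.
Variables (R : realType) (d : nat).
Local Notation zvec := 'rV[int]_d.

Lemma exists_q_list (A : seq zvec) (a : zvec) (L : seq zvec) : generates_Zd A -> inNA A a ->
  exists ls : seq (R[i] * {ffun 'I_d -> nat}), pfun ls a != 0 /\ forall c, inNA A c ->
   (exists s F, is_facet (R:=R) A s /\ is_facet_form (R:=R) A s F /\ F \in L /\
      ~ (exists b, inNA A b /\ zlin F (c - a) = zlin F b)) ->
   pfun ls c = 0.
Proof.
move=> gen Ha; elim: L => [|F L [ls [Hla Hlv]]].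
  have [ls Hls] := @polyfun_const R d 1.
  exists ls; split; first by rewrite -Hls oner_eq0.
  by move=> c _ [s [F [_ [_ []]]]].
have [[s [Hs HF]]|No] := classic (exists s, is_facet (R:=R) A s /\ is_facet_form (R:=R) A s F).
  have Fge0 := form_ge0 HF.
  have [N0 HN0] := cofinite gen Fge0 HF.2.2.
  have Fa0 := inNA_ge0 Fge0 Ha.
  set fa := `|zlin F a|%N.
  have Efa : zlin F a = fa%:Z by rewrite gez0_abs.
  pose ks := [seq k <- iota 0 (N0 + fa) | k != fa].
  have [ls' Hls'] := polyfun_prod F ks (ex_intro _ ls (fun c => erefl (pfun ls c)) : polyfun (pfun ls)).
  exists ls'; split.
    rewrite -Hls' mulf_neq0 // prodf_seq_eq0; apply/hasPn => k.
    rewrite mem_filter => /andP[Hk _] /=; rewrite Efa subr_eq0.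
    by rewrite -[(Posz fa)%:~R]/(fa%:R) eqr_nat eq_sym.
  move=> c Hc [s' [F' [Hs' [HF' [HFL Hnb]]]]].
  rewrite -Hls'; move: HFL; rewrite inE => /orP[/eqP EF|HFL]; last first.
    by rewrite Hlv ?mul0r //; exists s', F'.
  subst F'; apply/eqP; rewrite mulf_eq0 prodf_seq_eq0; apply/orP; right.
  have Fc0 := inNA_ge0 Fge0 Hc.
  set m := `|zlin F c|%N.
  have Em : zlin F c = m%:Z by rewrite gez0_abs.
  apply/hasP; exists m; last by rewrite /= Em subrr.
  rewrite mem_filter mem_iota add0n /=; apply/andP; split.
    apply/eqP => Emf; apply: Hnb; exists 0; split; first exact: inNA0.
    by rewrite zlinB zlin0 Em Efa Emf subrr.
  rewrite ltnNge; apply/negP => Hle; apply: Hnb.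
  have Hfm : (fa <= m)%N by lia.
  have [b [Hb Eb]] := HN0 (m - fa)%N (ltac:(lia)).
  by exists b; split => //; rewrite Eb -subzn // zlinB Em Efa.
exists ls; split => // c Hc [s' [F' [Hs' [HF' [HFL Hnb]]]]].
move: HFL; rewrite inE => /orP[/eqP EF|HFL]; last by apply: (Hlv c Hc); exists s', F'.
by exfalso; apply: No; exists s'; subst F'.
Qed.

Lemma exists_q (A : seq zvec) (a : zvec) : generates_Zd A -> scored R A -> inNA A a ->
  exists ls : seq (R[i] * {ffun 'I_d -> nat}), pfun ls a != 0 /\ forall c, inNA A c -> ~ inNA A (c - a) -> pfun ls c = 0.
Proof.
move=> gen Hsc Ha.
have [L HL] := facet_forms_finite R gen.
have [ls [Hla Hlv]] := exists_q_list L gen Ha.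
exists ls; split => // c Hc Hn; apply: Hlv => //.
have Hn1 : ~ inS1 R A (c - a) by move/(Hsc (c - a)).2.
apply: NNPP => Hno; apply: Hn1 => s Hs F HF; apply: NNPP => Hb; apply: Hno.
by exists s, F; do !split => //; apply: HL Hs HF.
Qed.
End Q.



Lemma scored_simple (R : realType) (d : nat) (A : seq 'rV[int]_d) :
  generates_Zd A -> scored R A -> C_S1_graded_simple R A.
Proof.
move=> gen Hsc N [Hsup [H0 Hadd Hscale Hact Hproj]].
have [[f0 [Nf0 [a Ha]]]|No] := classic (exists f, N f /\ exists a, f a != 0); last first.
  left => f Nf; apply: functional_extensionality => c; apply/eqP.
  apply: NNPP => Hc; apply: No; exists f; split => //; exists c; exact/negP.
right.
have SaA : inNA A a by apply/(Hsc a); apply: (Hsup f0 Nf0).2.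
have [ls [Hqa Hqv]] := exists_q gen Hsc SaA.
have Ndelta : forall b, inNA A b -> N (fun c => if c == b then 1 else 0).
  move=> b Hb.
  have N1 := Hproj f0 Nf0 a.
  have N2 := Hact _ (inDRA_mkP (e := - a) Hqv) _ N1.
  have D1 : forall c, inNA A c -> ~ inNA A (c + b) -> pfun (ls1 R d) c = 0.
    by move=> c Hc []; apply: inNAD.
  have N3 := Hact _ (inDRA_mkP D1) _ N2.
  have N4 := Hscale ((pfun ls a * f0 a)^-1) _ N3.
  suff <- : (fun c => (pfun ls a * f0 a)^-1 * dact (mkP (ls1 R d) b)
      (dact (mkP ls (- a)) (fun c0 => if c0 == a then f0 a else 0)) c) =
      (fun c => if c == b then 1 else 0) by [].
  apply: functional_extensionality => c; rewrite !dact_mkP pfun_ls1 mul1r opprK.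
  have [->|Hcb] := eqVneq c b.
    by rewrite subrr add0r eqxx mulVf // mulf_neq0.
  have -> : (c - b + a == a) = false.
    apply/negbTE; apply: contra Hcb => /eqP E; apply/eqP.
    by apply/subr0_eq; apply: (addIr a); rewrite add0r.
  by rewrite mulr0 mulr0.
move=> f [s Hs] Hsupp.
elim: s f Hs Hsupp => [|x s IH] f Hs Hsupp.
  have -> : f = (fun _ => 0) by apply: functional_extensionality => c; apply: Hs.
  exact: H0.
pose g := fun c => if c == x then 0 else f c.
have Ng : N g.
  apply: IH => [c Hc|c]; rewrite /g.
    by case: eqP => // /eqP Hcx; apply: Hs; rewrite inE negb_or Hcx.
  by case: (c =P x) => [_|_ Hc]; [rewrite eqxx | apply: Hsupp].
have [Hfx|Hfx] := eqVneq (f x) 0.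
  suff -> : f = g by [].
  by apply: functional_extensionality => c; rewrite /g; case: eqP => // ->.
have Nh := Hscale (f x) _ (Ndelta x (proj2 (Hsc x) (Hsupp x Hfx))).
have := Hadd _ _ Ng Nh.
suff -> : (fun c => g c + f x * (if c == x then 1 else 0)) = f by [].
apply: functional_extensionality => c; rewrite /g; case: eqP => [->|_].
  by rewrite add0r mulr1.
by rewrite mulr0 addr0.
Qed.

Lemma simple_scored (R : realType) (d : nat) (A : seq 'rV[int]_d) :
  C_S1_graded_simple R A -> scored R A.
Proof.
move=> Hsimp.
have NAS1 : forall v, inNA A v -> inS1 R A v.
  by move=> v Hv s Hs F HF; exists v.
pose N := fun f : 'rV[int]_d -> R[i] => laurent f /\ supported_in (inNA A) f.
have HN : graded_submodule A (inS1 R A) N.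
  split.
    by move=> f [Hl Hs]; split => // c Hc; apply: NAS1; apply: Hs.
  split.
  - by split; [exists [::] | move=> c; rewrite eqxx].
  - move=> f g [[s Hs] Hsf] [[s' Hs'] Hsg]; split.
      by exists (s ++ s') => c; rewrite mem_cat negb_or => /andP[H1 H2]; rewrite Hs // Hs' // addr0.
    move=> c Hc; have [Hf|Hf] := eqVneq (f c) 0.
      by apply: Hsg; move: Hc; rewrite Hf add0r.
    exact: Hsf.
  - move=> k f [[s Hs] Hsf]; split.
      by exists s => c Hc; rewrite Hs // mulr0.
    by move=> c; rewrite mulf_eq0 negb_or => /andP[_ H]; apply: Hsf.
  - by move=> P HP f [Hl Hs]; apply: HP.
  - move=> f [Hl Hs] a; split.
      by exists [:: a] => c; rewrite inE; case: eqP.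
    by move=> c; case: (c =P a) => [->|]; [apply: Hs | rewrite eqxx].
have delta : forall v, laurent (fun c : 'rV[int]_d => if c == v then (1 : R[i]) else 0).
  by move=> v; exists [:: v] => c; rewrite inE; case: eqP.
move=> v; split; first exact: NAS1.
move=> Hv.
case: (Hsimp N HN) => [Hz|Hall].
  exfalso.
  have N0 : N (fun c => if c == 0 then (1 : R[i]) else 0).
    split; first exact: delta.
    by move=> c; case: (c =P 0) => [->|]; [move=> _; apply: inNA0 | rewrite eqxx].
  have := congr1 (fun f => f 0) (Hz _ N0); rewrite /= eqxx => /eqP.
  by rewrite oner_eq0.
have Hsd : supported_in (inS1 R A) (fun c => if c == v then (1:R[i]) else 0).
  by move=> c; case: (c =P v) => [-> //|_ /negP []].

have [_ Hs] := Hall _ (delta v) Hsd.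
by apply: (Hs v); rewrite eqxx oner_eq0.
Qed.

Theorem proposition8p13 (R : realType) (d : nat) (A : seq 'rV[int]_d) :
  generates_Zd A ->
  (scored R A <-> C_S1_graded_simple R A).
Proof.
move=> gen; split; [exact: scored_simple | exact: simple_scored].
Qed.
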